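(* Let $v=v_1\cdots v_n$ be a word of distinct positive integers avoiding $31425,32415,31524,32514$, with positions of left-to-right maxima $a_1<\dots<a_h$ and of right-to-left maxima $b_1<\dots<b_g$ ($a_h=b_1$). Assume $g>1$, $a_h>h$, $h>2$ and $v_{a_{h-1}}>v_{b_2}$. Let $x=\max(\{j:1\le j<a_{h-1},\ v_j>v_{j+1}\}\cup\{0\})$. Then one of the following holds: (B-1) $x=0$; (B-2) $x\ne0$ and $a_h=a_{h-1}+1$; moreover, if $v_{b_2}>v_x$ then $v_x<v_j<v_{b_2}$ for all $a_h<j<b_2$; (B-3) $x\ne 0$, $a_h>a_{h-1}+1$, and $v_x<v_j<v_{a_{h-1}}$ for all $a_{h-1}<j<a_h$; moreover, if $v_{b_2}>v_x$ then $v_x<v_j<v_{b_2}$ for all $a_h<j<b_2$.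
   Context: A word of distinct positive integers avoids a pattern $P$ (a permutation of $[m]$) if no subsequence of length $m$ is order-isomorphic to $P$. A left-to-right (resp. right-to-left) maximum of $v$ is a letter $v_i$ greater than all letters to its left (resp. right). *)

(* Defs.v *)
From mathcomp Require Import all_boot.
Set Implicit Arguments. Unset Strict Implicit. Unset Printing Implicit Defensive.

(* Words are [seq nat]; positions are 1-indexed as in the paper. *)
Definition letter (v : seq nat) (i : nat) : nat := nth 0 v i.-1.

Definition order_iso (w P : seq nat) : Prop :=
  size w = size P /\
  forall k l, k < size P -> l < size P ->
    (nth 0 w k < nth 0 w l) = (nth 0 P k < nth 0 P l).

Definition avoids (v P : seq nat) : Prop :=
  ~ exists w, subseq w v /\ order_iso w P.

Definition is_ltr_max (v : seq nat) (i : nat) : bool :=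
  [&& 0 < i, i <= size v & [forall j : 'I_i, (0 < j) ==> (letter v j < letter v i)]].

Definition is_rtl_max (v : seq nat) (i : nat) : bool :=
  [&& 0 < i, i <= size v &
      [forall j : 'I_(size v).+1, (i < j) ==> (letter v j < letter v i)]].

Definition ltr_pos (v : seq nat) : seq nat := [seq i <- iota 1 (size v) | is_ltr_max v i].
Definition rtl_pos (v : seq nat) : seq nat := [seq i <- iota 1 (size v) | is_rtl_max v i].

Definition pos (s : seq nat) (k : nat) : nat := nth 0 s k.-1.

Definition xdesc (v : seq nat) (A : nat) : nat :=
  \max_(1 <= j < A | letter v j.+1 < letter v j) j.

(* Main.v *)
Require Import Defs.
From mathcomp Require Import all_boot zify.
Set Implicit Arguments.

Lemma letter_iota v : map (letter v) (iota 1 (size v)) = v.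
Proof.
rewrite (iotaDl 1 0) -map_comp.
rewrite -[RHS](mkseq_nth 0 v) /mkseq; apply: eq_map => i /=.
by [].
Qed.

Lemma sub_pos v ps : sorted ltn ps -> all (fun p => 0 < p <= size v) ps ->
  subseq (map (letter v) ps) v.
Proof.
move=> sps aps.
have -> : ps = filter (mem ps) (iota 1 (size v)).
  apply: (@sorted_eq _ leq).
  - exact: leq_trans.
  - exact: anti_leq.
  - by move: sps; rewrite ltn_sorted_uniq_leq => /andP[].
  - have := sorted_filter ltn_trans (mem ps) (@iota_ltn_sorted 1 (size v)).
    by rewrite ltn_sorted_uniq_leq => /andP[].
  - apply: uniq_perm.
    + by move: sps; rewrite ltn_sorted_uniq_leq => /andP[].
    + by apply: filter_uniq; apply: iota_uniq.
    + move=> p; rewrite mem_filter mem_iota /=.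
      case pin: (p \in ps) => //=.
      have := allP aps p pin; lia.
rewrite -[X in subseq _ X]letter_iota; apply: map_subseq; exact: filter_subseq.
Qed.

Lemma mono5 c1 c2 c3 c4 c5 p q : c1 < c2 -> c2 < c3 -> c3 < c4 -> c4 < c5 ->
  0 < p <= 5 -> 0 < q <= 5 ->
  (nth 0 [:: 0; c1; c2; c3; c4; c5] p < nth 0 [:: 0; c1; c2; c3; c4; c5] q) = (p < q).
Proof.
move=> h1 h2 h3 h4.
move: p q => [|[|[|[|[|[|p]]]]]] [|[|[|[|[|[|q]]]]]] //= _ _;
 first [done | apply/negbTE; rewrite -leqNgt; lia | lia].
Qed.

Lemma no_pat {v P} ps c1 c2 c3 c4 c5 : avoids v P -> sorted ltn ps ->
  all (fun p => 0 < p <= size v) ps -> c1 < c2 -> c2 < c3 -> c3 < c4 -> c4 < c5 ->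
  all (fun p => 0 < p <= 5) P ->
  map (letter v) ps = map (fun p => nth 0 [:: 0; c1; c2; c3; c4; c5] p) P -> False.
Proof.
move=> av sps aps h1 h2 h3 h4 aP e; apply: av.
exists (map (letter v) ps); split; first exact: sub_pos.
rewrite e; split; first by rewrite size_map.
move=> k l hk hl; rewrite !(nth_map 0) //.
apply: mono5 => //; apply: (allP aP); exact: mem_nth.
Qed.

Lemma ltr_spec {v i} : is_ltr_max v i ->
  (0 < i <= size v) /\ forall j, 0 < j < i -> letter v j < letter v i.
Proof.
case/and3P=> h0 hn /forallP H; split; first by rewrite h0 hn.
move=> j /andP[j0 ji]; have := H (Ordinal ji); by rewrite /= j0.
Qed.

Lemma rtl_spec {v i} : is_rtl_max v i ->
  (0 < i <= size v) /\ forall j, i < j <= size v -> letter v j < letter v i.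
Proof.
case/and3P=> h0 hn /forallP H; split; first by rewrite h0 hn.
move=> j /andP[ij jn]; have := H (Ordinal (jn : j < (size v).+1)); by rewrite /= ij.
Qed.

Lemma ltr_arg {v j} : 0 < j <= size v ->
  exists k, [/\ is_ltr_max v k, k <= j & letter v j <= letter v k].
Proof.
elim: j {-2}j (leqnn j) => [|m IH] j jm hj; first by exists j; lia.
case L: (is_ltr_max v j); first by exists j; rewrite leqnn.
have hj' := hj.
move: L; rewrite /is_ltr_max; case/andP: hj => -> -> /=.
move/negbT; rewrite negb_forall => /existsP[j' ].
rewrite negb_imply -leqNgt => /andP[j0 le].
have j'j := ltn_ord j'.
have j'm : j' <= m by lia.
have j'n : 0 < j' <= size v by lia.
have [k [k1 k2 k3]] := IH j' j'm j'n.
exists k; split => //; [lia | exact: leq_trans k3].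
Qed.

Lemma rtl_arg_aux v m j : size v - j <= m -> 0 < j <= size v ->
  exists k, [/\ is_rtl_max v k, j <= k & letter v j <= letter v k].
Proof.
elim: m j => [|m IH] j jm hj.
  case L: (is_rtl_max v j); first by exists j; rewrite leqnn.
  move: L; rewrite /is_rtl_max; case/andP: (hj) => -> -> /=.
  move/negbT; rewrite negb_forall => /existsP[j' ].
  rewrite negb_imply -leqNgt => /andP[j0 le].
  have := ltn_ord j'; lia.
case L: (is_rtl_max v j); first by exists j; rewrite leqnn.
move: L; rewrite /is_rtl_max; case/andP: (hj) => -> -> /=.
move/negbT; rewrite negb_forall => /existsP[j' ].
rewrite negb_imply -leqNgt => /andP[j0 le].
have j'j := ltn_ord j'.
have j'm : size v - j' <= m by lia.
have j'n : 0 < j' <= size v by lia.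
have [k [k1 k2 k3]] := IH j' j'm j'n.
exists k; split => //; [lia | exact: leq_trans k3].
Qed.

Lemma rtl_arg {v j} : 0 < j <= size v ->
  exists k, [/\ is_rtl_max v k, j <= k & letter v j <= letter v k].
Proof. exact: rtl_arg_aux. Qed.

Lemma letter_inj {v i j} : uniq v -> 0 < i <= size v -> 0 < j <= size v ->
  letter v i = letter v j -> i = j.
Proof.
move=> u hi hj; rewrite /letter => /eqP; rewrite nth_uniq //; last lia.
  move/eqP; lia.
lia.
Qed.

Lemma xdesc_spec v A : xdesc v A = 0 \/
  (0 < xdesc v A < A /\ letter v (xdesc v A).+1 < letter v (xdesc v A)).
Proof.
rewrite /xdesc big_nat_cond.
apply: (big_ind (fun y => y = 0 \/ (0 < y < A /\ letter v y.+1 < letter v y))).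
- by left.
- by move=> y z Hy Hz; rewrite /maxn; case: ifP.
- move=> i /andP[/andP[h1 h2] h3]; right; split => //; lia.
Qed.

Lemma filt_sorted (P : pred nat) n : sorted ltn [seq i <- iota 1 n | P i].
Proof. exact: (sorted_filter ltn_trans P (@iota_ltn_sorted 1 n)). Qed.

Lemma sorted_le s i j : sorted ltn s -> i <= j < size s -> nth 0 s i <= nth 0 s j.
Proof.
rewrite ltn_sorted_uniq_leq => /andP[_ ss] /andP[ij js].
apply: (sorted_leq_nth leq_trans leqnn 0 ss) => //; rewrite inE; lia.
Qed.

Lemma sorted_lt s i j : sorted ltn s -> i < j < size s -> nth 0 s i < nth 0 s j.
Proof.
move=> ss /andP[ij js].
apply: (sorted_ltn_nth ltn_trans 0 ss) => //; rewrite inE; lia.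
Qed.
Unset Implicit Arguments.

Theorem lemma3p10 (v : seq nat) :
  uniq v -> all (fun c => 0 < c) v ->
  avoids v [:: 3; 1; 4; 2; 5] -> avoids v [:: 3; 2; 4; 1; 5] ->
  avoids v [:: 3; 1; 5; 2; 4] -> avoids v [:: 3; 2; 5; 1; 4] ->
  let a := ltr_pos v in let h := size a in
  let b := rtl_pos v in let g := size b in
  1 < g -> h < pos a h -> 2 < h ->
  letter v (pos b 2) < letter v (pos a h.-1) ->
  let x := xdesc v (pos a h.-1) in
  (x = 0)
  \/ (x <> 0 /\ pos a h = (pos a h.-1).+1 /\
      (letter v x < letter v (pos b 2) ->
       forall j, pos a h < j < pos b 2 ->
         letter v x < letter v j < letter v (pos b 2)))
  \/ (x <> 0 /\ (pos a h.-1).+1 < pos a h /\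
      (forall j, pos a h.-1 < j < pos a h ->
         letter v x < letter v j < letter v (pos a h.-1)) /\
      (letter v x < letter v (pos b 2) ->
       forall j, pos a h < j < pos b 2 ->
         letter v x < letter v j < letter v (pos b 2))).
Proof.
move=> u _ av1 av2 av3 av4 a h b g g1 _ h2 _ x.
have sa : sorted ltn a by exact: filt_sorted.
have sb : sorted ltn b by exact: filt_sorted.
have memA k : (k \in a) = is_ltr_max v k.
  rewrite mem_filter mem_iota; case L: (is_ltr_max v k) => //=.
  have [] := ltr_spec L; lia.
have memB k : (k \in b) = is_rtl_max v k.
  rewrite mem_filter mem_iota; case L: (is_rtl_max v k) => //=.
  have [] := rtl_spec L; lia.
rewrite /pos /x /pos.
set A := nth 0 a h.-2; set M := nth 0 a h.-1; set B := nth 0 b 1.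

have hA : is_ltr_max v A by rewrite -memA mem_nth //; rewrite -/h; lia.
have hM : is_ltr_max v M by rewrite -memA mem_nth //; rewrite -/h; lia.
have AM : A < M by apply: sorted_lt => //; rewrite -/h; lia.
have acases k : k \in a -> k <= A \/ k = M.
  move=> ka; have ki : index k a < h by rewrite index_mem.
  have := nth_index 0 ka => <-.
  case: (leqP (index k a) h.-2) => hi.
    by left; apply: sorted_le => //; rewrite -/h; lia.
  by right; congr nth; rewrite -/h; lia.
have [/andP[A0 An] AA] := ltr_spec hA.
have [/andP[M0 Mn] MM] := ltr_spec hM.
have Mr : 0 < M <= size v by rewrite M0 Mn.
have Ar : 0 < A <= size v by rewrite A0 An.
have Mmax j : 0 < j <= size v -> letter v j <= letter v M.
  move=> hj; have [k [k1 k2 k3]] := ltr_arg hj.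
  have [/andP[k0 kn] KK] := ltr_spec k1.
  case: (acases k); first by rewrite memA.
  - move=> kA; apply: (leq_trans k3).
    case: (ltngtP k A) => kA'; last by rewrite kA'; apply: ltnW; apply: MM; lia.
    + apply: ltnW; apply: (ltn_trans (AA k _)); [lia | apply: MM; lia].
    + lia.
  - by move=> <-.
have Mstr j : 0 < j <= size v -> j != M -> letter v j < letter v M.
  move=> hj jM; rewrite ltn_neqAle Mmax // andbT; apply/eqP => e.
  have := letter_inj u hj Mr e; move/eqP: jM; lia.
have Jbet j : A < j < M -> letter v j < letter v A.
  move=> hj; have hj' : 0 < j <= size v by lia.
  have [k [k1 k2 k3]] := ltr_arg hj'.
  have [/andP[k0 kn] KK] := ltr_spec k1.
  have kA : k <= A.
    case: (acases k); [by rewrite memA | done | lia].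
  have le : letter v j <= letter v A.
    apply: (leq_trans k3); case: (ltngtP k A) => kA'; [ | lia | by rewrite kA'].
    by apply: ltnW; apply: AA; lia.
  rewrite ltn_neqAle le andbT; apply/eqP => e.
  have := letter_inj u hj' Ar e; lia.
have hB : is_rtl_max v B by rewrite -memB mem_nth.
have hb1 : is_rtl_max v (nth 0 b 0) by rewrite -memB mem_nth //; rewrite -/g; lia.
have [/andP[B0 Bn] BB] := rtl_spec hB.
have Br : 0 < B <= size v by rewrite B0 Bn.
have geM k : is_rtl_max v k -> M <= k.
  move=> kb; have [/andP[k0 kn] KK] := rtl_spec kb.
  rewrite leqNgt; apply/negP => kM.
  have := KK M; have := Mmax k; lia.
have Mb : is_rtl_max v M.
  rewrite /is_rtl_max M0 Mn /=; apply/forallP => j; apply/implyP => Mj.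
  apply: Mstr; [have := ltn_ord j; lia | rewrite neq_ltn Mj orbT //].
have b1M : nth 0 b 0 = M.
  apply/eqP; rewrite eqn_leq geM // andbT.
  have Mi : M \in b by rewrite memB.
  rewrite -(nth_index 0 Mi); apply: sorted_le => //; rewrite index_mem Mi; lia.
have b01 : nth 0 b 0 < B by apply: sorted_lt => //; lia.
have MB : M < B by lia.
have bcases k : k \in b -> k = M \/ B <= k.
  move=> kb; have ki : index k b < g by rewrite index_mem.
  have := nth_index 0 kb => <-.
  case: (index k b) ki => [|i] ki; first by left.
  by right; apply: sorted_le => //; lia.
have Jbet2 j : M < j < B -> letter v j < letter v B.
  move=> hj; have hj' : 0 < j <= size v by lia.
  have [k [k1 k2 k3]] := rtl_arg hj'.
  have [/andP[k0 kn] KK] := rtl_spec k1.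
  have kB : B <= k.
    case: (bcases k); [by rewrite memB | lia | done].
  have le : letter v j <= letter v B.
    apply: (leq_trans k3); case: (ltngtP k B) => kB'; [lia | | by rewrite kB'].
    by apply: ltnW; apply: BB; lia.
  rewrite ltn_neqAle le andbT; apply/eqP => e.
  have := letter_inj u hj' Br e; lia.
case: (xdesc_spec v A) => [-> | [hx dx]]; first by left.
set y := xdesc v A in hx dx *.
have xA : letter v y < letter v A by apply: AA; lia.
have yr : 0 < y <= size v by lia.
have y1r : 0 < y.+1 <= size v by lia.
have yA : y.+1 < A.
  case: (ltngtP y.+1 A) => // e; [lia | by move: dx; rewrite e; lia].
have BMl : letter v B < letter v M by apply: Mstr; [lia | rewrite neq_ltn MB orbT].
have claim2 : letter v y < letter v B -> forall j, M < j < B ->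
    letter v y < letter v j < letter v B.
  move=> yB j hj; rewrite Jbet2 // andbT.
  rewrite ltnNge; apply/negP => le.
  have hj' : 0 < j <= size v by lia.
  have ne : letter v j != letter v y.
    apply/eqP => e; have := letter_inj u hj' yr e; lia.
  have lt : letter v j < letter v y by rewrite ltn_neqAle ne le.
  case: (ltngtP (letter v j) (letter v y.+1)) => c.
  - apply: (no_pat [:: y; y.+1; M; j; B] (letter v j) (letter v y.+1) (letter v y) (letter v B) (letter v M) av4) => //=; lia.
  - apply: (no_pat [:: y; y.+1; M; j; B] (letter v y.+1) (letter v j) (letter v y) (letter v B) (letter v M) av3) => //=; lia.
  - have := letter_inj u hj' y1r c; lia.
have AMl : letter v A < letter v M by apply: MM; lia.
have claim1 : forall j, A < j < M -> letter v y < letter v j < letter v A.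
  move=> j hj; rewrite Jbet // andbT.
  rewrite ltnNge; apply/negP => le.
  have hj' : 0 < j <= size v by lia.
  have ne : letter v j != letter v y.
    apply/eqP => e; have := letter_inj u hj' yr e; lia.
  have lt : letter v j < letter v y by rewrite ltn_neqAle ne le.
  case: (ltngtP (letter v j) (letter v y.+1)) => c.
  - apply: (no_pat [:: y; y.+1; A; j; M] (letter v j) (letter v y.+1) (letter v y) (letter v A) (letter v M) av2) => //=; lia.
  - apply: (no_pat [:: y; y.+1; A; j; M] (letter v y.+1) (letter v j) (letter v y) (letter v A) (letter v M) av1) => //=; lia.
  - have := letter_inj u hj' y1r c; lia.
right; case: (ltngtP M A.+1) => c; first lia.
- by right; split; [lia | split => //].
- by left; split; [lia | split].
Qed.
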